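(* There is a constant $C>0$ (depending only on $d_{\min}$ and $d_{\max}$) such that for all sufficiently large $n$, for every target set size $t$ and every choice of out-degrees, and for all $k$ with $(1-\frac{1}{e^2})n\le k\le n-1$, the probability that the reverse reachable set of $B$ has exactly $k$ vertices is at most $\frac{C}{n^2}$; i.e., it is $O(\frac{1}{n^2})$.
   Context: Random graph model: $V$ is a set of $n$ vertices, $B\subseteq V$ a target set with $|B|=t$, each $v\in V$ has a prescribed out-degree $d_v$ with $2\le d_{\min}\le d_v\le d_{\max}$ (constants independent of $n$), and for each $v$ independently its out-neighbour set is chosen uniformly at random among all $d_v$-element subsets of $V$. The reverse reachable set of $B$ is the set of vertices having a directed path to a vertex of $B$. *)

(* Defs.v *)
From mathcomp Require Import all_boot.
From Stdlib Require Import Reals.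

Set Implicit Arguments.
Unset Strict Implicit.
Unset Printing Implicit Defensive.

(* An outcome of the random graph is the family of
   out-neighbour sets N v (for each v), i.e. a finite function
   V -> {set V}. *)
Definition outcomes (n : nat) (d : 'I_n -> nat)
  : {set {ffun 'I_n -> {set 'I_n}}} :=
  [set N : {ffun 'I_n -> {set 'I_n}} | [forall v, #|N v| == d v]].

Definition arc (n : nat) (N : {ffun 'I_n -> {set 'I_n}}) : rel 'I_n :=
  fun u w => w \in N u.

Definition rrs (n : nat) (N : {ffun 'I_n -> {set 'I_n}}) (B : {set 'I_n})
  : {set 'I_n} :=
  [set v | [exists b in B, connect (arc N) v b]].

(* Each N v is chosen independently and uniformly among d v-subsets, so the
   joint law is uniform on [outcomes n d]; the probability of an event is a
   ratio of cardinalities. *)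
Definition prob_rrs_size (n : nat) (d : 'I_n -> nat) (B : {set 'I_n}) (k : nat)
  : R :=
  (INR #|[set N in outcomes d | #|rrs N B| == k]| / INR #|outcomes d|)%R.

(* Main.v *)
Require Import Defs.
From Stdlib Require Import Lra Lia.
From mathcomp Require Import zify.
From mathcomp Require Import all_boot.
From Stdlib Require Import Reals.
Set Implicit Arguments. Unset Strict Implicit.
Local Notation "m ^ n" := (expn m n) : nat_scope.

Lemma foldr_prod (T : finType) (f : T -> nat) :
  foldr muln 1 [seq f x | x : T] = \prod_x f x.
Proof. by rewrite foldrE big_image. Qed.

Lemma famcard n (F : 'I_n -> {set {set 'I_n}}) :
  #|[set N : {ffun 'I_n -> {set 'I_n}} | [forall v, N v \in F v]]| = \prod_v #|F v|.
Proof.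
have := @card_family _ (fun _ => {set 'I_n}) (fun v => [pred A | A \in F v]).
rewrite foldr_prod => <-; apply: eq_card => N; rewrite inE.
by apply/forallP/familyP.
Qed.


Lemma bin2 m e : 'C(m.+2, e.+2) * (e.+2 * e.+1) = m.+2 * m.+1 * 'C(m, e).
Proof.
have h1 := mul_bin_diag m.+2 e.+1. have h2 := mul_bin_diag m.+1 e.
simpl in h1, h2. nia.
Qed.

Lemma binw j n d : 2 <= d -> j <= n -> 'C(j,d) * n^2 <= (j^2 * (1<j)) * 'C(n,d).
Proof.
move=> hd hjn.
case: (ltnP j 2) => hj.
  by rewrite bin_small ?mul0n //; apply: leq_trans hd.
case: j hj hjn => [|[|j]] // _ hjn.
case: n hjn => [|[|n]] // hjn.
case: d hd => [|[|e]] // _.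
idtac.
rewrite /= ?muln1 -(leq_pmul2r (_ : 0 < e.+2 * e.+1)) //.
have a := bin2 j e. have b := bin2 n e.
have c : 'C(j, e) <= 'C(n, e) by apply: leq_bin2l; lia.
rewrite mulnAC a -[X in _ <= X]mulnA b.
have d0 : j.+1 * n.+2 <= j.+2 * n.+1 by nia.
have d : j.+2 * j.+1 * n.+2 ^ 2 <= j.+2 ^ 2 * (n.+2 * n.+1).
  have -> : j.+2 * j.+1 * n.+2 ^ 2 = (j.+2 * n.+2) * (j.+1 * n.+2) by rewrite -mulnn mulnACA.
  have -> : j.+2 ^ 2 * (n.+2 * n.+1) = (j.+2 * n.+2) * (j.+2 * n.+1) by rewrite -mulnn mulnACA.
  by rewrite leq_mul2l d0 orbT.
apply: (@leq_trans (j.+2 * j.+1 * n.+2 ^ 2 * 'C(n, e))).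
  by rewrite mulnAC leq_mul2l c orbT.
by rewrite [X in _ <= X]mulnA leq_mul2r d orbT.
Qed.


Definition w (j : nat) := j ^ 2 * (1 < j).

Definition cl n (d : 'I_n -> nat) (S : {set 'I_n}) :=
  [set N in outcomes d | [forall v in S, N v \subset S]].

Lemma card_out n (d : 'I_n -> nat) : #|outcomes d| = \prod_v 'C(n, d v).
Proof.
have -> : outcomes d = [set N : {ffun 'I_n -> {set 'I_n}} | [forall v, N v \in [set A : {set 'I_n} | #|A| == d v]]].
  by apply/setP => N; rewrite !inE; apply: eq_forallb => v; rewrite inE.
rewrite famcard; apply: eq_bigr => v _.
by rewrite card_draws card_ord.
Qed.

Lemma card_cl n (d : 'I_n -> nat) S :
  #|cl d S| = \prod_v (if v \in S then 'C(#|S|, d v) else 'C(n, d v)).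
Proof.
pose F v := if v \in S then [set A : {set 'I_n} | A \subset S & #|A| == d v]
            else [set A : {set 'I_n} | #|A| == d v].
have -> : cl d S = [set N : {ffun 'I_n -> {set 'I_n}} | [forall v, N v \in F v]].
  apply/setP => N; rewrite !inE /F.
  apply/andP/forallP => [[/forallP h1 /forallP h2] v|h].
    have := h1 v; have := h2 v; case: (v \in S) => /=; rewrite inE.
      by move=> -> ->.
    by [].
  split; apply/forallP => v; have := h v; case: (v \in S); rewrite inE //=.
  - by case/andP.
  - by case/andP.
rewrite famcard; apply: eq_bigr => v _; rewrite /F.
case: (v \in S); first by rewrite cards_draws.
by rewrite card_draws card_ord.
Qed.

Lemma clbound n (d : 'I_n -> nat) S : (forall v, 2 <= d v) ->
  #|cl d S| * n ^ (2 * #|S|) <= w #|S| ^ #|S| * #|outcomes d|.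
Proof.
move=> hd.
have hS : #|S| <= n by rewrite -[n in _ <= n]card_ord max_card.
rewrite card_cl card_out mulnC expnM -prod_nat_const -prod_nat_const big_mkcond [X in _ <= X * _]big_mkcond /=.
rewrite -!big_split /=; apply: leq_prod => v _.
case: (v \in S); last by rewrite mul1n.
by rewrite mulnC binw.
Qed.


Lemma in_cl n (d : 'I_n -> nat) B N : N \in outcomes d -> N \in cl d (~: rrs N B).
Proof.
move=> hN; rewrite inE hN /=; apply/forallP => v; apply/implyP => hv.
apply/subsetP => x hx; move: hv; rewrite !inE; apply: contra.
case/existsP => b /andP [hb hc]; apply/existsP; exists b; rewrite hb /=.
apply: connect_trans hc; apply: connect1; exact: hx.
Qed.

Lemma event_bound n (d : 'I_n -> nat) B k : (forall v, 2 <= d v) ->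
  #|[set N in outcomes d | #|rrs N B| == k]| * n ^ (2 * (n - k))
   <= 'C(n, n - k) * (w (n - k) ^ (n - k) * #|outcomes d|).
Proof.
move=> hd.
set j := n - k.
set E := [set N in outcomes d | #|rrs N B| == k].
set P := [set S : {set 'I_n} | #|S| == j].
have h1 : #|E| <= \sum_(S in P) #|cl d S|.
  rewrite -sum1_card.
  apply: (@leq_trans (\sum_(N in E) \sum_(S in P) (N \in cl d S : nat))).
    apply: leq_sum => N; rewrite inE => /andP [hN /eqP hk].
    rewrite (bigD1 (~: rrs N B)) /=; last first.
      by rewrite inE cardsCs setCK card_ord hk.
    by rewrite in_cl.
  apply: (@leq_trans (\sum_N \sum_(S in P) (N \in cl d S : nat))).
    rewrite [X in _ <= X](bigID (fun N => N \in E)) /=; exact: leq_addr.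
  rewrite exchange_big /=; apply: eq_leq. apply: eq_big => // S _.
  rewrite -sum1_card [RHS]big_mkcond /=; apply: eq_bigr => N _.
  by case: (N \in cl d S).
apply: (@leq_trans ((\sum_(S in P) #|cl d S|) * n ^ (2 * j))).
  by rewrite leq_mul2r h1 orbT.
rewrite big_distrl /=.
apply: (@leq_trans (\sum_(S in P) (w j ^ j * #|outcomes d|))).
  apply: leq_sum => S; rewrite inE => /eqP <-; exact: clbound.
by rewrite sum_nat_const card_draws card_ord.
Qed.

Section Real.
Local Open Scope R_scope.

Lemma INR_muln (a b : nat) : INR (muln a b) = INR a * INR b.
Proof. by rewrite -mult_INR. Qed.

Lemma INR_expn (a b : nat) : INR (expn a b) = INR a ^ b.
Proof. elim: b => [|b IH]; first by rewrite expn0. by rewrite expnS INR_muln IH. Qed.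

Lemma exp_pow_nat x (m : nat) : exp x ^ m = exp (INR m * x).
Proof.
elim: m => [|m IH]; first by rewrite /= Rmult_0_l exp_0.
rewrite [LHS]/= IH -exp_plus S_INR; f_equal; ring.
Qed.

Lemma key (m : nat) : (0 < m)%nat -> INR m.+1 ^ (2 * m) <= exp 2 * INR m ^ (2 * m).
Proof.
move=> hm.
have hx : 0 < INR m by apply: lt_0_INR; apply/ltP.
have h1 : INR m.+1 = INR m * (1 + 1 / INR m) by rewrite S_INR; field; lra.
have h2 : (1 + 1 / INR m) ^ m <= exp 1.
  apply: (Rle_trans _ (exp (1 / INR m) ^ m)).
    apply: pow_incr; split; last exact: exp_ineq1_le.
    have : 0 < 1 / INR m by apply: Rdiv_lt_0_compat; lra.
    lra.
  rewrite exp_pow_nat; right; f_equal; field; lra.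
rewrite h1 Rpow_mult_distr Rmult_comm; apply: Rmult_le_compat_r.
  apply: pow_le; lra.
rewrite pow_mult.
have -> : exp 2 = exp 1 ^ 2 by rewrite /= Rmult_1_r -exp_plus; f_equal; lra.
rewrite -pow_mult Nat.mul_comm pow_mult; apply: pow_incr; split; last exact: h2.
apply: pow_le; have : 0 < 1 / INR m by apply: Rdiv_lt_0_compat; lra.
lra.
Qed.

Lemma bin2le (n : nat) : INR 'C(n, 2) * 2 <= INR n ^ 2.
Proof.
have h : leq (muln 'C(n, 2) 2) (expn n 2).
  have := mul_bin_diag n 1; rewrite bin1 => h.
  have -> : muln 'C(n, 2) 2 = muln n n.-1 by rewrite h mulnC.
  by rewrite expnS expn1 leq_mul2l leq_pred orbT.
have := le_INR _ _ (elimT leP h).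
by rewrite INR_muln INR_expn.
Qed.

Lemma binstep (n m : nat) : INR 'C(n, m.+1) * INR m.+1 <= INR n * INR 'C(n, m).
Proof.
have h : leq (muln 'C(n, m.+1) m.+1) (muln n 'C(n, m)).
  by rewrite mulnC mul_bin_left leq_mul2r leq_subr orbT.
have := le_INR _ _ (elimT leP h).
by rewrite !INR_muln.
Qed.

Lemma growth (n : nat) : forall i : nat, exp 2 * INR i.+2 <= INR n ->
  INR 'C(n, i.+2) * INR i.+2 ^ (2 * i.+2) <= 8 * INR n ^ (2 * i.+1).
Proof.
have e2 : 0 < exp 2 by apply: exp_pos.
have e21 : 1 <= exp 2.
  have := exp_ineq1_le 2; lra.
elim => [|i IH] hn.
  have := bin2le n.
  have -> : INR 2 = 2 by rewrite /=; lra.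
  rewrite /=; lra.
set m := i.+2.
have hm : INR m.+1 = INR m + 1 by rewrite S_INR.
have hm0 : 0 <= INR m by apply: pos_INR.
have hn' : exp 2 * INR m <= INR n.
  rewrite hm in hn; nra.
have ih := IH hn'.
have k := key (m := m) isT.
have bs := binstep n m.
set c0 := INR 'C(n, m) in ih bs *.
set c1 := INR 'C(n, m.+1) in bs *.
set x := INR m in hm hm0 hn' k ih bs *.
set N := INR n in hn hn' ih bs *.
set P := INR m.+1 ^ (2 * m) in k *.
set Q := x ^ (2 * m) in k ih *.
set Rr := N ^ (2 * i.+1) in ih *.
have c00 : 0 <= c0 by apply: pos_INR.
have c10 : 0 <= c1 by apply: pos_INR.
have Q0 : 0 <= Q by apply: pow_le.
have P0 : 0 <= P by apply: pow_le; rewrite hm; lra.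
have R0 : 0 <= Rr by apply: pow_le; nra.
have -> : INR m.+1 ^ (2 * m.+1) = INR m.+1 * INR m.+1 * P.
  have -> : INR m.+1 ^ (2 * m.+1) = INR m.+1 ^ (2 + 2 * m) by f_equal; lia.
  rewrite pow_add /P; ring.
have -> : N ^ (2 * m) = Rr * N * N.
  have -> : N ^ (2 * m) = N ^ (2 * i.+1 + 2) by f_equal; lia.
  rewrite pow_add /Rr; ring.
have hn2 : exp 2 * (x + 1) <= N by rewrite -hm.
rewrite hm in bs P0 *.
apply: (Rle_trans _ ((N * c0) * ((x + 1) * (exp 2 * Q)))).
  apply: (Rle_trans _ ((c1 * (x + 1)) * ((x + 1) * P))); first by right; ring.
  apply: Rmult_le_compat; [nra|nra|exact: bs|].
  apply: Rmult_le_compat_l; lra.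
have -> : N * c0 * ((x + 1) * (exp 2 * Q)) = (c0 * Q) * N * (exp 2 * (x + 1)) by ring.
have N0 : 0 <= N by apply: pos_INR.
have -> : 8 * (Rr * N * N) = (8 * Rr * N) * N by ring.
apply: Rmult_le_compat; [apply: Rmult_le_pos => //; apply: Rmult_le_pos => //|nra| |exact: hn2].
apply: Rmult_le_compat_r; lra.
Qed.

End Real.

Theorem lemma18 (dmin dmax : nat) (Hdmin : 2 <= dmin) (Hd : dmin <= dmax) :
  exists C : R, (0 < C)%R /\
  exists n0 : nat, forall n : nat, n0 <= n ->
  forall (t : nat) (B : {set 'I_n}), #|B| = t ->
  forall d : 'I_n -> nat, (forall v, dmin <= d v <= dmax) ->
  forall k : nat,
    ((1 - 1 / exp 2) * INR n <= INR k)%R -> k <= n - 1 ->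
    (prob_rrs_size d B k <= C / (INR n ^ 2))%R.
Proof.
exists 8%R; split; first lra.
exists 2 => n hn t B _ d hdv k hk hkn.
have hd2 : forall v, 2 <= d v.
  by move=> v; case/andP: (hdv v) => h _; apply: leq_trans h.
have hEv := event_bound B k hd2.
set E := [set N in outcomes d | #|rrs N B| == k] in hEv.
set A := #|E| in hEv. set T := #|outcomes d| in hEv.
have hAT : A <= T.
  apply: subset_leq_card; apply/subsetP => N; rewrite inE => /andP [].
  by [].
rewrite /prob_rrs_size -/E -/A -/T.
have hN : (0 < INR n)%R by apply: lt_0_INR; apply/ltP; lia.
have hN2 : (0 < INR n ^ 2)%R by apply: pow_lt.
case: (posnP A) => [A0|Apos].
  rewrite A0 /= /Rdiv Rmult_0_l.
  apply: Rmult_le_pos; first lra.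
  by apply: Rlt_le; apply: Rinv_0_lt_compat.
have Tpos : 0 < T by apply: leq_trans hAT.
have [i hi] : exists i, n - k = i.+2.
  case E1: (n - k) => [|[|i]]; first lia.
    move: hEv; rewrite E1 /w /= muln0 expn1 mul0n muln0.
    move=> h0; have : 0 < A * n ^ (2 * 1) by rewrite muln_gt0 Apos expn_gt0; apply/orP; left; lia.
    lia.
  by exists i.
rewrite hi in hEv.
have hw : w i.+2 = i.+2 ^ 2 by rewrite /w muln1.
rewrite hw -expnM in hEv.
have e2 : (0 < exp 2)%R by apply: exp_pos.
have hj : (exp 2 * INR i.+2 <= INR n)%R.
  rewrite -hi minus_INR; last by apply/leP; lia.
  have hy : (exp 2 * (1 / exp 2) = 1)%R by field; lra.
  set y := (1 / exp 2)%R in hk hy.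
  nra.
have g := growth hj.
have hR := le_INR _ _ (elimT leP hEv).
rewrite INR_muln in hR. rewrite INR_muln in hR. rewrite INR_muln in hR. rewrite INR_expn in hR. rewrite INR_expn in hR.
have hT : (0 < INR T)%R by apply: lt_0_INR; apply/ltP.
set c := INR 'C(n, i.+2) in hR g.
set Q := (INR i.+2 ^ (2 * i.+2))%R in hR g.
have hpw : (INR n ^ (2 * i.+2) = INR n ^ (2 * i.+1) * INR n ^ 2)%R.
  rewrite -pow_add; f_equal; lia.
rewrite hpw in hR.
set M := (INR n ^ (2 * i.+1))%R in hR g.
have M0 : (0 < M)%R by apply: pow_lt.
have hA : (INR A * INR n ^ 2 <= 8 * INR T)%R.
  apply: (Rmult_le_reg_l M) => //.
  have c0 : (0 <= c * Q)%R.
    apply: Rmult_le_pos; first exact: pos_INR.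
    apply: pow_le; exact: pos_INR.
  nra.
apply: (Rmult_le_reg_r (INR T * INR n ^ 2)); first nra.
have -> : (INR A / INR T * (INR T * INR n ^ 2) = INR A * INR n ^ 2)%R by field; lra.
have -> : (8 / INR n ^ 2 * (INR T * INR n ^ 2) = 8 * INR T)%R by field; lra.
exact: hA.
Qed.
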